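(* Let $J=V+\sqrt{-1}S$ be a complex positive semidefinite matrix with $V=\mathrm{Re}\,J$ strictly positive. Then $J\#J^\top=V^{1/2}\{I+(V^{-1/2}SV^{-1/2})^2\}^{1/2}V^{1/2}$.
   Context: $P\#Q$ is the operator geometric mean: $P^{1/2}(P^{-1/2}QP^{-1/2})^{1/2}P^{1/2}$ for positive definite $P,Q$ and $\lim_{\epsilon\downarrow0}(P+\epsilon I)\#(Q+\epsilon I)$ for positive semidefinite $P,Q$. *)

(* Defs.v *)
From HB Require Import structures.
From mathcomp Require Import all_boot all_order all_algebra.
From mathcomp Require Import reals.
From mathcomp Require Import complex.
From Stdlib Require Import ClassicalEpsilon.
Set Implicit Arguments. Unset Strict Implicit. Unset Printing Implicit Defensive.
Import Order.TTheory GRing.Theory Num.Theory.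
Local Open Scope ring_scope.

Section MatrixDefs.
Variable R : realType.
Local Notation C := (R[i]).

Definition adjmx (m n : nat) (A : 'M[C]_(m, n)) : 'M[C]_(n, m) :=
  (map_mx (fun z : C => z^*) A)^T.

Definition psdmx (n : nat) (A : 'M[C]_n) : Prop :=
  adjmx A = A /\ forall x : 'cV[C]_n, 0 <= (adjmx x *m A *m x) ord0 ord0.

Definition pdmx (n : nat) (A : 'M[C]_n) : Prop :=
  adjmx A = A /\ forall x : 'cV[C]_n, x != 0 -> 0 < (adjmx x *m A *m x) ord0 ord0.

(* the positive semidefinite square root A^{1/2} of a psd matrix A
   (chosen by classical choice among psd B with B B = A; 0 if none) *)
Definition sqrtmx (n : nat) (A : 'M[C]_n) : 'M[C]_n :=
  epsilon (inhabits 0) (fun B => psdmx B /\ B *m B = A).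

Definition Remx (m n : nat) (A : 'M[C]_(m, n)) : 'M[C]_(m, n) := map_mx (fun z => 'Re z) A.
Definition Immx (m n : nat) (A : 'M[C]_(m, n)) : 'M[C]_(m, n) := map_mx (fun z => 'Im z) A.

Definition gmean_pd (n : nat) (P Q : 'M[C]_n) : 'M[C]_n :=
  let P12 := sqrtmx P in
  let Pm12 := invmx P12 in
  P12 *m sqrtmx (Pm12 *m Q *m Pm12) *m P12.

(* P # Q = G for psd P, Q:  G = lim_{eps -> 0+} (P + eps I) # (Q + eps I)
   (epsilon-delta limit, entrywise) *)
Definition is_gmean (n : nat) (P Q G : 'M[C]_n) : Prop :=
  forall e : R, 0 < e -> exists d : R, 0 < d /\
    forall eps : R, 0 < eps -> eps < d ->
      forall i j, `| gmean_pd (P + (eps%:C)%C%:M) (Q + (eps%:C)%C%:M) i j - G i j | < (e%:C)%C.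

End MatrixDefs.

(* Main.v *)
Require Import Defs.
From mathcomp Require Import all_boot all_order all_algebra.
From mathcomp Require Import reals complex.
From HB Require Import structures.
From mathcomp Require Import sesquilinear spectral ring.
From Stdlib Require Import ClassicalEpsilon FunctionalExtensionality.
Set Implicit Arguments. Unset Strict Implicit. Unset Printing Implicit Defensive.
Import Order.TTheory GRing.Theory Num.Theory.
Local Open Scope ring_scope.

Section Gen.
Variable C : numClosedFieldType.

Definition adj m p (A : 'M[C]_(m,p)) : 'M[C]_(p,m) := (map_mx (fun z => z^*) A)^T.

Lemma adjK m p (A : 'M[C]_(m,p)) : adj (adj A) = A.
Proof. by apply/matrixP=> i j; rewrite !mxE conjCK. Qed.

Lemma adj_mul m p q (A : 'M[C]_(m,p)) (B : 'M[C]_(p,q)) : adj (A *m B) = adj B *m adj A.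
Proof.
apply/matrixP=> i j; rewrite !mxE rmorph_sum; apply: eq_bigr => k _.
by rewrite !mxE rmorphM mulrC.
Qed.

Lemma adj_add m p (A B : 'M[C]_(m,p)) : adj (A + B) = adj A + adj B.
Proof. by apply/matrixP=> i j; rewrite !mxE rmorphD. Qed.

Lemma adj_opp m p (A : 'M[C]_(m,p)) : adj (- A) = - adj A.
Proof. by apply/matrixP=> i j; rewrite !mxE rmorphN. Qed.

Lemma adj_scale m p a (A : 'M[C]_(m,p)) : adj (a *: A) = a^* *: adj A.
Proof. by apply/matrixP=> i j; rewrite !mxE rmorphM. Qed.

Lemma adj_scalar m a : adj (a%:M : 'M[C]_m) = (a^*)%:M.
Proof.
apply/matrixP=> i j; rewrite !mxE eq_sym; case: (i == j) => /=.
  by rewrite !mulr1n. by rewrite !mulr0n conjC0.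
Qed.

Lemma adj1 m : adj (1%:M : 'M[C]_m) = 1%:M.
Proof. by rewrite adj_scalar conjC1. Qed.

Lemma adj_inv m (A : 'M[C]_m) : adj (invmx A) = invmx (adj A).
Proof. by rewrite /adj map_invmx trmx_inv. Qed.

Lemma adj_diag m (d : 'rV[C]_m) : adj (diag_mx d) = diag_mx (map_mx (fun z => z^*) d).
Proof. by rewrite /adj map_diag_mx tr_diag_mx. Qed.

Definition psd n (A : 'M[C]_n) := adj A = A /\ forall x : 'cV[C]_n, 0 <= (adj x *m A *m x) ord0 ord0.

Definition sqrtm n (A : 'M[C]_n) : 'M[C]_n := epsilon (inhabits 0) (fun B => psd B /\ B *m B = A).

Definition unitary n (U : 'M[C]_n) := U *m adj U = 1%:M.
Definition udiag n (U : 'M[C]_n) (d : 'rV[C]_n) := adj U *m diag_mx d *m U.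

Lemma unitaryC n (U : 'M[C]_n) : unitary U -> adj U *m U = 1%:M.
Proof. by move/mulmx1C. Qed.

Lemma spectral_herm n (A : 'M[C]_n) : adj A = A ->
  exists U d, [/\ unitary U, A = udiag U d & forall k, d ord0 k \is Num.real].
Proof.
move=> hA.
have hh : A \is hermsymmx.
  apply/is_hermitianmxP; rewrite expr0 scale1r.
  by rewrite -[LHS]hA /adj map_trmx.
have /orthomx_spectralP eA := hermitian_normalmx hh.
have Uu := spectral_unitarymx A.
exists (spectralmx A), (spectral_diag A); split.
- by move/unitarymxP: Uu; rewrite /unitary /adj map_trmx.
- by rewrite /udiag {1}eA invmx_unitary // /adj map_trmx.
- by move=> k; have /mxOverP := hermitian_spectral_diag_real hh; apply.
Qed.

Section U.
Variable n : nat.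
Variable U : 'M[C]_n.
Hypothesis uU : unitary U.
Let uU' := unitaryC uU.

Lemma diag_mul (a b : 'rV[C]_n) : diag_mx a *m diag_mx b = diag_mx (\row_k (a ord0 k * b ord0 k)).
Proof.
apply/matrixP=> i j; rewrite mul_diag_mx !mxE.
by case: (i == j); rewrite ?mulr1n ?mulr0n ?mulr0.
Qed.

Lemma udiag_mul (a b : 'rV[C]_n) : udiag U a *m udiag U b = udiag U (\row_k (a ord0 k * b ord0 k)).
Proof.
rewrite /udiag !mulmxA -(mulmxA _ U (adj U)) uU mulmx1.
by rewrite -(mulmxA (adj U) (diag_mx a)) diag_mul.
Qed.

Lemma udiag_add (a b : 'rV[C]_n) : udiag U a + udiag U b = udiag U (a + b).
Proof.
rewrite /udiag -mulmxDl -mulmxDr; congr (_ *m _ *m _).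
by apply/matrixP=> i j; rewrite !mxE mulrnDl.
Qed.

Lemma udiag_opp (a : 'rV[C]_n) : - udiag U a = udiag U (- a).
Proof.
rewrite /udiag -mulNmx -mulmxN; congr (_ *m _ *m _).
by apply/matrixP=> i j; rewrite !mxE mulNrn.
Qed.

Lemma udiag_scale c (a : 'rV[C]_n) : c *: udiag U a = udiag U (c *: a).
Proof.
rewrite /udiag scalemxAl scalemxAr; congr (_ *m _ *m _).
by apply/matrixP=> i j; rewrite !mxE mulrnAr.
Qed.

Lemma udiag_const c : udiag U (const_mx c) = c%:M.
Proof. by rewrite /udiag diag_const_mx mul_mx_scalar -scalemxAl uU' scalemx1. Qed.

Lemma adj_udiag (d : 'rV[C]_n) : adj (udiag U d) = udiag U (map_mx (fun z => z^*) d).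
Proof. by rewrite /udiag !adj_mul adjK adj_diag mulmxA. Qed.

Lemma udiag_inv (d : 'rV[C]_n) : (forall k, d ord0 k != 0) ->
  invmx (udiag U d) = udiag U (\row_k (d ord0 k)^-1).
Proof.
move=> nz.
have h : udiag U d *m udiag U (\row_k (d ord0 k)^-1) = 1%:M.
  rewrite udiag_mul -[X in _ = X]udiag_const; congr udiag.
  by apply/rowP=> k; rewrite !mxE mulfV.
have [u1 _] := mulmx1_unit h.
by rewrite -[LHS]mulmx1 -h mulKmx.
Qed.

Lemma quadform (d : 'rV[C]_n) (x : 'cV[C]_n) :
  (adj x *m udiag U d *m x) ord0 ord0 = \sum_k d ord0 k * `|(U *m x) k ord0| ^+ 2.
Proof.
rewrite /udiag !mulmxA -adj_mul -!mulmxA mulmxA mxE.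
apply: eq_bigr => k _; rewrite mul_mx_diag !mxE normCK.
by rewrite mulrC mulrA mulrC (mulrC _ (_ ^*)) mulrA.
Qed.

Lemma Ux_delta k : U *m adj (row k U) = \col_i ((i == k)%:R).
Proof.
apply/matrixP=> i j; rewrite !mxE.
have := congr1 (fun M : 'M[C]_n => M i k) uU; rewrite !mxE => <-.
by apply: eq_bigr => l _; rewrite !mxE.
Qed.

Lemma quad_delta (d : 'rV[C]_n) k : (adj (adj (row k U)) *m udiag U d *m adj (row k U)) ord0 ord0 = d ord0 k.
Proof.
rewrite quadform Ux_delta (bigD1 k) //= big1 ?addr0.
  by rewrite mxE eqxx normr1 expr1n mulr1.
by move=> i ik; rewrite mxE (negPf ik) normr0 expr0n mulr0.
Qed.

Lemma udiag_eig (d : 'rV[C]_n) k : udiag U d *m adj (row k U) = d ord0 k *: adj (row k U).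
Proof.
rewrite /udiag -!mulmxA Ux_delta.
have -> : diag_mx d *m \col_i ((i == k)%:R) = d ord0 k *: \col_i ((i == k)%:R).
  apply/matrixP=> i j; rewrite mul_diag_mx !mxE.
  by case: eqP => [->|]; rewrite ?mulr1 ?mulr0.
by rewrite -scalemxAr -Ux_delta mulmxA uU' mul1mx.
Qed.

Lemma adjrow_neq0 k : adj (row k U) != 0.
Proof.
apply/eqP=> h; have := Ux_delta k; rewrite h mulmx0 => /matrixP/(_ k ord0).
by rewrite !mxE eqxx => /eqP; rewrite eq_sym oner_eq0.
Qed.

Lemma psd_udiag (d : 'rV[C]_n) : (forall k, 0 <= d ord0 k) -> psd (udiag U d).
Proof.
move=> h; split.
  rewrite adj_udiag; congr udiag; apply/rowP=> k; rewrite mxE.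
  by apply/CrealP; apply: ger0_real.
move=> x; rewrite quadform; apply: sumr_ge0 => k _.
by apply: mulr_ge0 => //; apply: exprn_ge0.
Qed.

Lemma psd_udiag_ge0 (d : 'rV[C]_n) k : psd (udiag U d) -> 0 <= d ord0 k.
Proof. by case=> _ /(_ (adj (row k U))); rewrite quad_delta. Qed.

End U.

Lemma psd_herm n (A : 'M[C]_n) : psd A -> adj A = A. Proof. by case. Qed.

Lemma sqrtm_spec n (A : 'M[C]_n) : psd A -> psd (sqrtm A) /\ sqrtm A *m sqrtm A = A.
Proof.
move=> pA; rewrite /sqrtm.
suff H : exists B, psd B /\ B *m B = A.
  exact: (epsilon_spec (inhabits 0) (fun B => psd B /\ B *m B = A) H).
have [U [d [uU eA rd]]] := spectral_herm (psd_herm pA).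
have d0 : forall k, 0 <= d ord0 k by move=> k; apply: (psd_udiag_ge0 uU); rewrite -eA.
exists (udiag U (\row_k sqrtC (d ord0 k))); split.
  by apply: psd_udiag => // k; rewrite mxE sqrtC_ge0.
rewrite udiag_mul // eA; congr udiag; apply/rowP=> k; rewrite !mxE.
by rewrite -expr2 sqrtCK.
Qed.

Lemma adj_quad_real n (A : 'M[C]_n) (x : 'cV[C]_n) : psd A -> 
  0 <= (adj x *m A *m x) ord0 ord0.
Proof. by case=> _; apply. Qed.

Lemma row_adj_row n (U : 'M[C]_n) k : unitary U ->
  (adj (adj (row k U)) *m adj (row k U)) = 1%:M.
Proof.
move=> uU; apply/matrixP=> i j; rewrite !ord1 adjK -row_mul.
by rewrite Ux_delta // !mxE eqxx.
Qed.

Lemma eig_bound n (B1 B2 U : 'M[C]_n) (l : 'rV[C]_n) k :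
  psd B1 -> psd B2 -> unitary U -> (forall k, l ord0 k \is Num.real) ->
  B1 - B2 = udiag U l ->
  `|l ord0 k| ^+ 2 <= `|(adj (adj (row k U)) *m (B1 *m B1 - B2 *m B2) *m adj (row k U)) ord0 ord0|.
Proof.
move=> p1 p2 uU rl eD; set x := adj (row k U).
have Dx : (B1 - B2) *m x = l ord0 k *: x by rewrite eD udiag_eig.
have hD : adj (B1 - B2) = B1 - B2 by rewrite adj_add adj_opp !psd_herm.
have xD : adj x *m (B1 - B2) = l ord0 k *: adj x.
  have := congr1 (@adj n 1) Dx; rewrite adj_mul adj_scale hD => ->.
  by rewrite (CrealP (rl k)).
have xx := row_adj_row k uU; rewrite -/x in xx.
have eq1 : B1 *m B1 - B2 *m B2 = (B1 - B2) *m B1 + B2 *m (B1 - B2).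
  by rewrite mulmxBl mulmxBr addrA subrK.
set a := (adj x *m B1 *m x) ord0 ord0.
set b := (adj x *m B2 *m x) ord0 ord0.
have a0 : 0 <= a by apply: adj_quad_real.
have b0 : 0 <= b by apply: adj_quad_real.
have eab : l ord0 k = a - b.
  have := congr1 (fun M : 'M[C]_1 => M ord0 ord0) (congr1 (mulmx^~ x) xD).
  rewrite /= -scalemxAl xx mulmxBr mulmxBl.
  have -> : (l ord0 k *: (1%:M : 'M[C]_1)) ord0 ord0 = l ord0 k.
    by rewrite !mxE eqxx mulr1.
  move=> <-.
  by rewrite [LHS]mxE [X in _ + X]mxE.
have -> : (adj x *m (B1 *m B1 - B2 *m B2) *m x) ord0 ord0 = l ord0 k * (a + b).
  rewrite eq1 mulmxDr mulmxDl !mulmxA xD -!mulmxA Dx -!scalemxAl -!scalemxAr.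
  by rewrite !mulmxA mxE [in X in _ + X]mxE [in X in X + _]mxE mulrDr.
rewrite normrM expr2 ler_wpM2l // (ger0_norm (addr_ge0 a0 b0)) eab.
by apply: le_trans (ler_normB _ _) _; rewrite !ger0_norm.
Qed.


Lemma spectral_psd_diff n (B1 B2 : 'M[C]_n) : psd B1 -> psd B2 ->
  exists U l, [/\ unitary U, B1 - B2 = udiag U l & forall k, l ord0 k \is Num.real].
Proof.
move=> p1 p2; apply: spectral_herm.
by rewrite adj_add adj_opp !psd_herm.
Qed.

Lemma sqrt_unique n (B1 B2 : 'M[C]_n) : psd B1 -> psd B2 -> B1 *m B1 = B2 *m B2 -> B1 = B2.
Proof.
move=> p1 p2 e; have [U [l [uU eD rl]]] := spectral_psd_diff p1 p2.
have l0 : forall k, l ord0 k = 0.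
  move=> k; have := eig_bound k p1 p2 uU rl eD.
  rewrite e subrr mulmx0 mul0mx mxE normr0 => h.
  have : `|l ord0 k| ^+ 2 = 0 by apply/eqP; rewrite eq_le h exprn_ge0.
  by move/eqP; rewrite expf_eq0 /= normr_eq0 => /eqP.
apply/eqP; rewrite -subr_eq0 eD.
have -> : l = const_mx 0 by apply/rowP=> k; rewrite !mxE l0.
by rewrite udiag_const //; apply/eqP; apply/matrixP=> i j; rewrite !mxE mul0rn.
Qed.

Lemma sqrtm_eq n (A B : 'M[C]_n) : psd B -> B *m B = A -> sqrtm A = B.
Proof.
move=> pB eB.
have [p1 e1] : psd (sqrtm A) /\ sqrtm A *m sqrtm A = A.
  exact: (epsilon_spec (inhabits 0) (fun B => psd B /\ B *m B = A) (ex_intro _ B (conj pB eB))).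
by apply: sqrt_unique => //; rewrite e1 eB.
Qed.

Lemma unitary_le1 n (U : 'M[C]_n) k i : unitary U -> `|U k i| <= 1.
Proof.
move=> uU.
have h : \sum_j `|U k j| ^+ 2 = 1.
  have := congr1 (fun M : 'M[C]_n => M k k) uU; rewrite !mxE eqxx /= => h; apply: etrans h.
  by apply: eq_bigr => j _; rewrite normCK !mxE.
rewrite -(expr_le1 (n:=2)) // -h (bigD1 i) //= lerDl.
by apply: sumr_ge0 => j _; apply: exprn_ge0.
Qed.

Lemma quad_bound n (E : 'M[C]_n) (x : 'cV[C]_n) (e : C) :
  (forall i, `|x i ord0| <= 1) -> (forall i j, `|E i j| <= e) ->
  `|(adj x *m E *m x) ord0 ord0| <= e *+ n *+ n.
Proof.
move=> hx hE; rewrite mxE.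
apply: le_trans (ler_norm_sum _ _ _) _.
have -> : e *+ n *+ n = \sum_(j < n) (e *+ n) by rewrite sumr_const card_ord.
apply: ler_sum => j _; rewrite mxE mulr_suml.
apply: le_trans (ler_norm_sum _ _ _) _.
have -> : e *+ n = \sum_(i < n) e by rewrite sumr_const card_ord.
apply: ler_sum => i _; rewrite !mxE !normrM.
rewrite -[X in _ <= X]mul1r -[X in _ <= X]mulr1.
apply: ler_pM; rewrite ?mulr_ge0 //.
apply: ler_pM => //; by rewrite norm_conjC.
Qed.

Lemma sqrt_bound n (B1 B2 : 'M[C]_n) (e : C) : psd B1 -> psd B2 -> 0 <= e ->
  (forall i j, `|(B1 *m B1 - B2 *m B2) i j| <= e) ->
  forall i j, `|(B1 - B2) i j| ^+ 2 <= (e *+ n *+ n) *+ n *+ n.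
Proof.
move=> p1 p2 e0 hE i j; have [U [l [uU eD rl]]] := spectral_psd_diff p1 p2.
set E := e *+ n *+ n.
have E0 : 0 <= E by rewrite mulrn_wge0 // mulrn_wge0.
have hl : forall k, `|l ord0 k| <= sqrtC E.
  move=> k; rewrite -(ler_pXn2r (n:=2)) // ?nnegrE ?sqrtC_ge0 // sqrtCK.
  apply: le_trans (eig_bound k p1 p2 uU rl eD) _.
  apply: quad_bound => // i'; rewrite !mxE norm_conjC; exact: unitary_le1.
have hD : `|(B1 - B2) i j| <= sqrtC E *+ n.
  rewrite eD /udiag mxE.
  apply: le_trans (ler_norm_sum _ _ _) _.
  have -> : sqrtC E *+ n = \sum_(k < n) sqrtC E by rewrite sumr_const card_ord.
  apply: ler_sum => k _; rewrite mul_mx_diag !mxE !normrM.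
  rewrite -[X in _ <= X]mul1r -[X in _ <= X]mulr1.
  apply: ler_pM; rewrite ?mulr_ge0 //; last by apply: unitary_le1.
  apply: ler_pM => //; by rewrite norm_conjC; apply: unitary_le1.
have := hD; rewrite -(ler_pXn2r (n:=2)) ?nnegrE ?mulrn_wge0 ?sqrtC_ge0 //.
move=> /le_trans; apply.
by rewrite -mulr_natr exprMn sqrtCK expr2 mulrA !mulr_natr -mulrnA -!mulrnA.
Qed.


Definition cvg0 (f : C -> C) (L : C) := forall e : C, 0 < e ->
  exists d : C, 0 < d /\ forall x, 0 < x -> x < d -> `|f x - L| < e.

Lemma min_pos (d1 d2 : C) : 0 < d1 -> 0 < d2 -> exists d, [/\ 0 < d, d <= d1 & d <= d2].
Proof.
move=> h1 h2; have /orP[h|h] := real_leVge (gtr0_real h1) (gtr0_real h2).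
  by exists d1. by exists d2.
Qed.

Lemma cvg0_const c : cvg0 (fun _ => c) c.
Proof. by move=> e e0; exists 1; split=> // x _ _; rewrite subrr normr0. Qed.

Lemma cvg0_add f g a b : cvg0 f a -> cvg0 g b -> cvg0 (fun x => f x + g x) (a + b).
Proof.
move=> hf hg e e0; have e2 : 0 < e / 2%:R by rewrite divr_gt0 ?ltr0n.
have [d1 [d10 h1]] := hf _ e2; have [d2 [d20 h2]] := hg _ e2.
have [d [d0 dd1 dd2]] := min_pos d10 d20.
exists d; split=> // x x0 xd.
rewrite opprD addrACA (splitr e); apply: le_lt_trans (ler_normD _ _) _.
apply: ltrD; [apply: h1 | apply: h2] => //; exact: lt_le_trans xd _.
Qed.

Lemma cvg0_opp f a : cvg0 f a -> cvg0 (fun x => - f x) (- a).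
Proof.
move=> hf e e0; have [d [d0 h]] := hf _ e0; exists d; split=> // x x0 xd.
by rewrite -opprD normrN; apply: h.
Qed.

Lemma cvg0_mul f g a b : cvg0 f a -> cvg0 g b -> cvg0 (fun x => f x * g x) (a * b).
Proof.
move=> hf hg e e0.
set K := `|b| + 1; set A := `|a| + 1.
have K0 : 0 < K by rewrite ltr_wpDl.
have A0 : 0 < A by rewrite ltr_wpDl.
have e2 : 0 < e / 2%:R by rewrite divr_gt0 ?ltr0n.
have [d1 [d10 h1]] := hg _ ltr01.
have [d2 [d20 h2]] := hg _ (divr_gt0 e2 A0).
have [d3 [d30 h3]] := hf _ (divr_gt0 e2 K0).
have [d' [d'0 d'1 d'2]] := min_pos d10 d20.
have [d [d0 dd' dd3]] := min_pos d'0 d30.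
exists d; split=> // x x0 xd.
have xd3 : x < d3 by apply: lt_le_trans dd3.
have xd1 : x < d1 by apply: lt_le_trans (le_trans dd' d'1).
have xd2 : x < d2 by apply: lt_le_trans (le_trans dd' d'2).
have -> : f x * g x - a * b = (f x - a) * g x + a * (g x - b).
  by rewrite mulrBl mulrBr addrA subrK.
rewrite (splitr e); apply: le_lt_trans (ler_normD _ _) _.
rewrite !normrM; apply: ltr_leD.
  have hg1 : `|g x| <= K.
    have -> : g x = (g x - b) + b by rewrite subrK.
    apply: le_trans (ler_normD _ _) _; rewrite addrC /K lerD2l.
    exact/ltW/h1.
  apply: le_lt_trans (ler_wpM2l (normr_ge0 _) hg1) _.
  by rewrite -ltr_pdivlMr //; apply: h3.
have ha : `|a| <= A by rewrite /A lerDl.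
apply: le_trans (ler_pM (normr_ge0 _) (normr_ge0 _) ha (ltW (h2 _ x0 xd2))) _.
by rewrite mulrC divfK // gt_eqF.
Qed.


Lemma cvg0_sum (I : Type) (r : seq I) (F : I -> C -> C) (L : I -> C) :
  (forall i, cvg0 (F i) (L i)) ->
  cvg0 (fun x => \sum_(i <- r) F i x) (\sum_(i <- r) L i).
Proof.
move=> h; elim: r => [|i r IH].
  rewrite big_nil (_ : (fun x => _) = (fun _ => 0)); first exact: cvg0_const.
  by apply: functional_extensionality => x; rewrite big_nil.
rewrite big_cons (_ : (fun x => _) = (fun x => F i x + \sum_(j <- r) F j x)).
  exact: cvg0_add.
by apply: functional_extensionality => x; rewrite big_cons.
Qed.

Lemma cvg0_ext f g a : (forall x, 0 < x -> f x = g x) -> cvg0 f a -> cvg0 g a.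
Proof.
move=> e h e' e0; have [d [d0 hd]] := h _ e0; exists d; split=> // x x0 xd.
by rewrite -e //; apply: hd.
Qed.

Definition mcvg0 m p (F : C -> 'M[C]_(m,p)) (L : 'M[C]_(m,p)) :=
  forall i j, cvg0 (fun x => F x i j) (L i j).

Lemma mcvg0_const m p (A : 'M[C]_(m,p)) : mcvg0 (fun _ => A) A.
Proof. by move=> i j; apply: cvg0_const. Qed.

Lemma mcvg0_add m p (F G : C -> 'M[C]_(m,p)) A B :
  mcvg0 F A -> mcvg0 G B -> mcvg0 (fun x => F x + G x) (A + B).
Proof.
move=> hF hG i j; rewrite mxE (_ : (fun x => _) = (fun x => F x i j + G x i j)).
  exact: cvg0_add.
by apply: functional_extensionality => x; rewrite mxE.
Qed.

Lemma mcvg0_mul m p q (F : C -> 'M[C]_(m,p)) (G : C -> 'M[C]_(p,q)) A B :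
  mcvg0 F A -> mcvg0 G B -> mcvg0 (fun x => F x *m G x) (A *m B).
Proof.
move=> hF hG i j; rewrite mxE (_ : (fun x => _) = (fun x => \sum_k F x i k * G x k j)).
  apply: cvg0_sum => k; exact: cvg0_mul.
by apply: functional_extensionality => x; rewrite mxE.
Qed.

Lemma mcvg0_scale m p (F : C -> 'M[C]_(m,p)) A c :
  mcvg0 F A -> mcvg0 (fun x => c *: F x) (c *: A).
Proof.
move=> hF i j; rewrite mxE (_ : (fun x => _) = (fun x => c * F x i j)).
  apply: cvg0_mul => //; exact: cvg0_const.
by apply: functional_extensionality => x; rewrite mxE.
Qed.

Lemma mcvg0_diag n (d : C -> 'rV[C]_n) (d0 : 'rV[C]_n) :
  (forall k, cvg0 (fun x => d x ord0 k) (d0 ord0 k)) ->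
  mcvg0 (fun x => diag_mx (d x)) (diag_mx d0).
Proof.
move=> h i j; rewrite mxE (_ : (fun x => _) = (fun x => d x ord0 i *+ (i == j))).
  case: (i == j) => /=.
    rewrite mulr1n (_ : (fun x => _) = (fun x => d x ord0 i)); first exact: h.
    by apply: functional_extensionality => x; rewrite mulr1n.
  rewrite mulr0n (_ : (fun x => _) = (fun x => 0)); first exact: cvg0_const.
  by apply: functional_extensionality => x; rewrite mulr0n.
by apply: functional_extensionality => x; rewrite mxE.
Qed.

Lemma mcvg0_ext m p (F G : C -> 'M[C]_(m,p)) A :
  (forall x, 0 < x -> F x = G x) -> mcvg0 F A -> mcvg0 G A.
Proof. by move=> e h i j; apply: (cvg0_ext _ (h i j)) => x x0; rewrite e. Qed.

Lemma fin_delta (T : eqType) (s : seq T) (Q : T -> C -> Prop) :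
  (forall t, exists d, 0 < d /\ forall x, 0 < x -> x < d -> Q t x) ->
  exists d, 0 < d /\ forall x, 0 < x -> x < d -> forall t, t \in s -> Q t x.
Proof.
move=> h; elim: s => [|t s [d [d0 hd]]]; first by exists 1.
have [d' [d'0 hd']] := h t.
have [d'' [d''0 h1 h2]] := min_pos d0 d'0.
exists d''; split=> // x x0 xd t'; rewrite inE => /orP[/eqP->|ts].
  by apply: hd' => //; apply: lt_le_trans h2.
by apply: hd => //; apply: lt_le_trans h1.
Qed.

Lemma mcvg0_unif m p (F : C -> 'M[C]_(m,p)) A : mcvg0 F A ->
  forall e, 0 < e -> exists d, 0 < d /\ forall x, 0 < x -> x < d ->
    forall i j, `|F x i j - A i j| < e.
Proof.
move=> h e e0.
have [d [d0 hd]] := @fin_delta _ (index_enum (prod 'I_m 'I_p))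
  (fun t x => `|F x t.1 t.2 - A t.1 t.2| < e) (fun t => h t.1 t.2 e e0).
exists d; split=> // x x0 xd i j.
by have := hd x x0 xd (i, j); apply; rewrite mem_index_enum.
Qed.


Lemma sqrt_facts (v x : C) : 0 < v -> 0 < x ->
  let s := sqrtC (v + x) in let t := sqrtC v in
  [/\ 0 < t, t <= s, (s - t) * t <= x & (t^-1 - s^-1) * (t * t) <= s - t].
Proof.
move=> v0 x0 s t.
have t0 : 0 < t by rewrite /t sqrtC_gt0.
have vx0 : 0 < v + x by rewrite addr_gt0.
have s0 : 0 < s by rewrite /s sqrtC_gt0.
have ts : t <= s.
  by rewrite /s /t ler_sqrtC ?nnegrE ?(ltW v0) ?(ltW vx0) // lerDl ltW.
have st : (s - t) * (s + t) = x.
  have -> : (s - t) * (s + t) = s ^+ 2 - t ^+ 2 by ring.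
  by rewrite /s /t !sqrtCK addrAC subrr add0r.
have stp : 0 <= s - t by rewrite subr_ge0.
split=> //.
  apply: (@le_trans _ _ ((s - t) * (s + t))); last by rewrite st.
  by rewrite ler_wpM2l // lerDr ltW.
have -> : t^-1 - s^-1 = (s - t) / (s * t).
  by field; rewrite ?gt_eqF //.
rewrite -[X in _ <= X]mulr1 -mulrA; apply: ler_wpM2l => //.
rewrite mulrC ler_pdivrMr ?mulr_gt0 // mul1r.
by apply: ler_wpM2r => //; apply: ltW.
Qed.

Lemma cvg0_sqrt (v : C) : 0 < v -> cvg0 (fun x => sqrtC (v + x)) (sqrtC v).
Proof.
move=> v0 e e0; have t0 : 0 < sqrtC v by rewrite sqrtC_gt0.
exists (e * sqrtC v); split; first by rewrite mulr_gt0.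
move=> x x0 xd; have [_ ts h1 _] := sqrt_facts v0 x0.
rewrite ger0_norm ?subr_ge0 // -(ltr_pM2r t0).
exact: le_lt_trans h1 xd.
Qed.

Lemma cvg0_isqrt (v : C) : 0 < v -> cvg0 (fun x => (sqrtC (v + x))^-1) ((sqrtC v)^-1).
Proof.
move=> v0 e e0; have t0 : 0 < sqrtC v by rewrite sqrtC_gt0.
exists (e * (sqrtC v * sqrtC v * sqrtC v)); split; first by rewrite !mulr_gt0.
move=> x x0 xd; have [_ ts h1 h2] := sqrt_facts v0 x0.
have s0 : 0 < sqrtC (v + x) by apply: lt_le_trans ts.
rewrite distrC ger0_norm; last by rewrite subr_ge0 lef_pV2 ?posrE.
rewrite -(ltr_pM2r (mulr_gt0 (mulr_gt0 t0 t0) t0)).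
apply: le_lt_trans _ xd; apply: le_trans _ h1.
by rewrite mulrA; apply: ler_wpM2r => //; apply: ltW.
Qed.


Lemma mcvg0_sqrtm n (A : C -> 'M[C]_n) (A0 : 'M[C]_n) :
  (forall x, 0 < x -> psd (A x)) -> psd A0 -> mcvg0 A A0 ->
  mcvg0 (fun x => sqrtm (A x)) (sqrtm A0).
Proof.
move=> pA pA0 hA i j e e0.
set N : C := 1 *+ n *+ n *+ n *+ n.
have N0 : 0 <= N by rewrite !mulrn_wge0.
have N10 : 0 < N + 1 by rewrite ltr_wpDl.
set eta := e ^+ 2 / (N + 1).
have eta0 : 0 < eta by rewrite divr_gt0 // exprn_gt0.
have [d [d0 hd]] := mcvg0_unif hA eta0.
exists d; split=> // x x0 xd.
have [p1 e1] := sqrtm_spec (pA x x0).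
have [p2 e2] := sqrtm_spec pA0.
have hE : forall i j, `|(sqrtm (A x) *m sqrtm (A x) - sqrtm A0 *m sqrtm A0) i j| <= eta.
  by move=> i' j'; rewrite e1 e2 !mxE ltW // hd.
have := sqrt_bound p1 p2 (ltW eta0) hE i j.
rewrite !mxE => h.
rewrite -(ltr_pXn2r (n:=2)) ?nnegrE ?normr_ge0 ?(ltW e0) //.
apply: le_lt_trans h _.
have -> : eta *+ n *+ n *+ n *+ n = eta * N by rewrite /N !mulrnAr mulr1.
rewrite /eta mulrAC ltr_pdivrMr // ltr_pM2l ?exprn_gt0 //.
by rewrite ltrDl.
Qed.


Lemma inv_eq n (A B : 'M[C]_n) : A *m B = 1%:M -> invmx A = B.
Proof.
move=> h; have [u1 _] := mulmx1_unit h.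
by rewrite -[LHS]mulmx1 -h mulKmx.
Qed.

Lemma invmx_mul n (A B : 'M[C]_n) : A \in unitmx -> B \in unitmx ->
  invmx (A *m B) = invmx B *m invmx A.
Proof.
move=> uA uB; apply: inv_eq.
by rewrite mulmxA -(mulmxA A) mulmxV // mulmx1 mulmxV.
Qed.

Lemma psd_cong n (A K : 'M[C]_n) : psd A -> adj K = K -> psd (K *m A *m K).
Proof.
move=> [hA qA] hK; split; first by rewrite !adj_mul hK hA mulmxA.
move=> x; have := qA (K *m x).
by rewrite adj_mul hK !mulmxA.
Qed.

Lemma adjxx_gt0 n (y : 'cV[C]_n) : y != 0 -> 0 < (adj y *m y) ord0 ord0.
Proof.
move=> y0; rewrite mxE.
have -> : \sum_j adj y ord0 j * y j ord0 = \sum_j `|y j ord0| ^+ 2.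
  by apply: eq_bigr => j _; rewrite normCKC !mxE.
have [j yj] : exists j, y j ord0 != 0.
  apply/existsP; apply: contraR y0 => /existsPn h.
  apply/eqP/matrixP=> i k; rewrite ord1 mxE; apply/eqP.
  by have := h i; rewrite negbK.
rewrite (bigD1 j) //= ltr_pwDl ?exprn_gt0 ?normr_gt0 //.
by apply: sumr_ge0 => i _; apply: exprn_ge0.
Qed.


Lemma quad_cong n (K M : 'M[C]_n) (w : 'cV[C]_n) : adj K = K ->
  adj w *m (K *m M *m K) *m w = adj (K *m w) *m M *m (K *m w).
Proof. by move=> hK; rewrite adj_mul hK !mulmxA. Qed.

Lemma quad_shift n (M : 'M[C]_n) (y : 'cV[C]_n) x :
  (adj y *m (M + x%:M) *m y) ord0 ord0 = (adj y *m M *m y) ord0 ord0 + x * (adj y *m y) ord0 ord0.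
Proof.
rewrite mulmxDr mulmxDl mul_mx_scalar -scalemxAl mxE; congr (_ + _).
by rewrite mxE.
Qed.

Lemma psd_trT n (M : 'M[C]_n) (y : 'cV[C]_n) : psd M -> 0 <= (adj y *m M^T *m y) ord0 ord0.
Proof.
move=> [hM qM]; have := qM (map_mx (fun z => z^*) y).
suff -> : (adj y *m M^T *m y) ord0 ord0 =
  (adj (map_mx (fun z => z^*) y) *m M *m map_mx (fun z => z^*) y) ord0 ord0 by [].
have e1 : forall A : 'M[C]_1, A ord0 ord0 = A^T ord0 ord0 by move=> A; rewrite mxE.
have h1 : y^T = adj (map_mx (fun z => z^*) y) by apply/matrixP=> i j; rewrite !mxE conjCK.
have h2 : (adj y)^T = map_mx (fun z => z^*) y by apply/matrixP=> i j; rewrite !mxE.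
by rewrite [LHS]e1 !trmx_mul trmxK h1 h2 mulmxA.
Qed.

Definition gm n (P Q : 'M[C]_n) : 'M[C]_n :=
  let P12 := sqrtm P in let Pm12 := invmx P12 in
  P12 *m sqrtm (Pm12 *m Q *m Pm12) *m P12.

Section Main.
Variable n : nat.
Variable J : 'M[C]_n.
Hypothesis pJ : psd J.
Let V := map_mx (fun z => 'Re z) J.
Let S := map_mx (fun z => 'Im z) J.
Hypothesis hV : adj V = V.
Variable U0 : 'M[C]_n.
Variable v : 'rV[C]_n.
Hypothesis uU0 : unitary U0.
Hypothesis eV : V = udiag U0 v.
Hypothesis vpos : forall k, 0 < v ord0 k.

Lemma J_VS : J = V + 'i *: S.
Proof. by apply/matrixP=> i j; rewrite !mxE -Crect. Qed.

Lemma hJ : adj J = J. Proof. by case: pJ. Qed.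

Lemma Jij i j : J j i = (J i j)^*.
Proof. by rewrite -{1}hJ !mxE. Qed.

Lemma JT_VS : J^T = V - 'i *: S.
Proof.
apply/matrixP=> i j; rewrite !mxE Jij.
by rewrite [X in X^*]Crect conjC_rect ?Creal_Re ?Creal_Im // mulNr.
Qed.

Lemma adjS : adj S = - S.
Proof.
apply/matrixP=> i j; rewrite !mxE Jij Im_conj.
by apply/CrealP; rewrite rpredN Creal_Im.
Qed.



Definition Rm (x : C) := locked (udiag U0 (\row_k sqrtC (v ord0 k + x))).
Definition Ri (x : C) := locked (udiag U0 (\row_k (sqrtC (v ord0 k + x))^-1)).

Section X.
Variable x : C.
Hypothesis x0 : 0 <= x.

Lemma vx_gt0 k : 0 < v ord0 k + x.
Proof. by rewrite ltr_wpDr. Qed.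

Lemma sq_gt0 k : 0 < sqrtC (v ord0 k + x).
Proof. by rewrite sqrtC_gt0 vx_gt0. Qed.

Lemma Rm_psd : psd (Rm x).
Proof. by rewrite /Rm -lock; apply: psd_udiag => // k; rewrite mxE ltW ?sq_gt0. Qed.

Lemma Ri_psd : psd (Ri x).
Proof. by rewrite /Ri -lock; apply: psd_udiag => // k; rewrite mxE invr_ge0 ltW ?sq_gt0. Qed.

Lemma adj_Ri : adj (Ri x) = Ri x. Proof. by case: Ri_psd. Qed.
Lemma adj_Rm : adj (Rm x) = Rm x. Proof. by case: Rm_psd. Qed.

Lemma Rm_sq : Rm x *m Rm x = V + x%:M.
Proof.
rewrite /Rm -lock udiag_mul // eV -(udiag_const uU0) udiag_add //; congr udiag.
by apply/rowP=> k; rewrite !mxE -expr2 sqrtCK.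
Qed.

Lemma Rm_Ri : Rm x *m Ri x = 1%:M.
Proof.
rewrite /Rm /Ri -!lock udiag_mul // -(udiag_const uU0); congr udiag.
by apply/rowP=> k; rewrite !mxE mulfV // gt_eqF ?sq_gt0.
Qed.

Lemma Ri_Rm : Ri x *m Rm x = 1%:M.
Proof. exact: mulmx1C Rm_Ri. Qed.

Lemma Rm_unit : Rm x \in unitmx.
Proof. by case: (mulmx1_unit Rm_Ri). Qed.

Lemma invRm : invmx (Rm x) = Ri x.
Proof. exact: inv_eq Rm_Ri. Qed.

Definition T := Ri x *m S *m Ri x.
Definition H := 'i *: T.

Lemma adj_H : adj H = H.
Proof.
rewrite /H /T adj_scale adj_mul adj_Ri adj_mul adj_Ri adjS conjCi mulNmx mulmxN scaleNr scalerN opprK.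
by rewrite mulmxA.
Qed.

Lemma IpH : 1%:M + H = Ri x *m (J + x%:M) *m Ri x.
Proof.
rewrite J_VS addrAC -Rm_sq mulmxDr mulmxDl !mulmxA Ri_Rm mul1mx -mulmxA Rm_Ri.
by rewrite /H /T -scalemxAl -scalemxAr mulmxA.
Qed.

Lemma ImH : 1%:M - H = Ri x *m (J^T + x%:M) *m Ri x.
Proof.
rewrite JT_VS addrAC -Rm_sq mulmxDr mulmxDl !mulmxA Ri_Rm mul1mx -mulmxA Rm_Ri.
by rewrite /H /T mulNmx mulmxN -scalemxAl -scalemxAr mulmxA.
Qed.

Lemma TT : 1%:M + T *m T = 1%:M - H *m H.
Proof.
rewrite /H -scalemxAl -scalemxAr scalerA -expr2 sqrCi scaleN1r opprK //.
Qed.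

Lemma H_spec : exists U h, [/\ unitary U, H = udiag U h,
  (forall k, h ord0 k \is Num.real),
  (forall k, 0 <= 1 + h ord0 k /\ 0 <= 1 - h ord0 k) &
  (0 < x -> forall k, 0 < 1 + h ord0 k)].
Proof.
have [U [h [uU eH rh]]] := spectral_herm adj_H.
have ep : 1%:M + H = udiag U (const_mx 1 + h) by rewrite eH -udiag_add // udiag_const.
have em : 1%:M - H = udiag U (const_mx 1 - h) by rewrite eH udiag_opp // -udiag_add // udiag_const.
have yn0 : forall k, Ri x *m adj (row k U) != 0.
  move=> k; apply/eqP => h0; have := adjrow_neq0 uU k.
  by rewrite -[adj (row k U)]mul1mx -Rm_Ri -mulmxA h0 mulmx0 eqxx.
have qp : forall k, 1 + h ord0 k = (adj (Ri x *m adj (row k U)) *m (J + x%:M) *m (Ri x *m adj (row k U))) ord0 ord0.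
  move=> k; have := quad_delta uU (const_mx 1 + h) k.
  by rewrite -ep IpH quad_cong ?adj_Ri // !mxE => <-.
have qm : forall k, 1 - h ord0 k = (adj (Ri x *m adj (row k U)) *m (J^T + x%:M) *m (Ri x *m adj (row k U))) ord0 ord0.
  move=> k; have := quad_delta uU (const_mx 1 - h) k.
  by rewrite -em ImH quad_cong ?adj_Ri // !mxE => <-.
exists U, h; split=> //.
- move=> k; split.
    rewrite qp quad_shift addr_ge0 ?mulr_ge0 //; first exact: adj_quad_real.
    exact/ltW/adjxx_gt0.
  rewrite qm quad_shift addr_ge0 ?mulr_ge0 //; first exact: psd_trT.
  exact/ltW/adjxx_gt0.
- move=> xp k; rewrite qp quad_shift ltr_wpDl ?mulr_gt0 //; first exact: adj_quad_real.
  exact/adjxx_gt0.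
Qed.

Lemma A_psd : psd (1%:M + T *m T).
Proof.
have [U [h [uU eH rh hpm hpos]]] := H_spec.
rewrite TT eH udiag_mul // udiag_opp // -(udiag_const uU) udiag_add //.
apply: psd_udiag => // k; rewrite !mxE -expr2.
have -> : 1 - h ord0 k ^+ 2 = (1 - h ord0 k) * (1 + h ord0 k) by ring.
by case: (hpm k) => ? ?; apply: mulr_ge0.
Qed.

Lemma gm_eq : 0 < x ->
  gm (J + x%:M) (J^T + x%:M) = Rm x *m sqrtm (1%:M + T *m T) *m Rm x.
Proof.
move=> xp.
have [U [h [uU eH rh hpm hpos]]] := H_spec.
have hm0 : forall k, 0 <= 1 - h ord0 k ^+ 2.
  move=> k; have -> : 1 - h ord0 k ^+ 2 = (1 - h ord0 k) * (1 + h ord0 k) by ring.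
  by case: (hpm k) => ? ?; apply: mulr_ge0.
have h1n0 : forall k, 1 + h ord0 k != 0 by move=> k; rewrite gt_eqF ?hpos.
set A := 1%:M + T *m T.
set m := \row_k sqrtC (1 - h ord0 k ^+ 2).
have eA : A = udiag U (\row_k (1 - h ord0 k ^+ 2)).
  rewrite /A TT eH udiag_mul // udiag_opp // -(udiag_const uU) udiag_add //.
  by congr udiag; apply/rowP=> k; rewrite !mxE expr2.
have pA : psd A by rewrite eA; apply: psd_udiag => // k; rewrite mxE.
have eM : sqrtm A = udiag U m.
  apply: sqrtm_eq; first by apply: psd_udiag => // k; rewrite mxE sqrtC_ge0.
  rewrite udiag_mul // eA; congr udiag; apply/rowP=> k.
  by rewrite !mxE -expr2 sqrtCK.
have ep : 1%:M + H = udiag U (const_mx 1 + h) by rewrite eH -udiag_add // udiag_const.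
have em : 1%:M - H = udiag U (const_mx 1 - h) by rewrite eH udiag_opp // -udiag_add // udiag_const.
have eHi : invmx (1%:M + H) = udiag U (\row_k (1 + h ord0 k)^-1).
  rewrite ep udiag_inv //; last by move=> k; rewrite !mxE.
  by congr udiag; apply/rowP=> k; rewrite !mxE.
have uH : 1%:M + H \in unitmx.
  rewrite ep; apply: (proj1 (mulmx1_unit (B := udiag U (\row_k (1 + h ord0 k)^-1)) _)).
  rewrite udiag_mul // -(udiag_const uU); congr udiag; apply/rowP=> k.
  by rewrite !mxE mulfV.
set P := J + x%:M; set Q := J^T + x%:M.
have eP : P = Rm x *m (1%:M + H) *m Rm x.
  by rewrite IpH !mulmxA Rm_Ri mul1mx -mulmxA Ri_Rm mulmx1.
have eQ : Q = Rm x *m (1%:M - H) *m Rm x.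
  by rewrite ImH !mulmxA Rm_Ri mul1mx -mulmxA Ri_Rm mulmx1.
have pH : psd (1%:M + H) by rewrite ep; apply: psd_udiag => // k; rewrite !mxE; case: (hpm k).
have pP : psd P by rewrite eP; apply: psd_cong => //; exact: adj_Rm.
have uP : P \in unitmx by rewrite eP !unitmx_mul Rm_unit uH.
have [p12 e12] := sqrtm_spec pP.
set P12 := sqrtm P in p12 e12 *.
have u12 : P12 \in unitmx by move: uP; rewrite -e12 unitmx_mul => /andP[].
set Pm12 := invmx P12.
have hPm : adj Pm12 = Pm12 by rewrite /Pm12 adj_inv psd_herm.
set Y := Rm x *m sqrtm A *m Rm x.
have pY : psd Y by apply: psd_cong; [exact: (sqrtm_spec pA).1 | exact: adj_Rm].
set Z := Pm12 *m Y *m Pm12.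
have pZ : psd Z by apply: psd_cong.
have ePi : invmx P = Ri x *m invmx (1%:M + H) *m Ri x.
  rewrite eP !invmx_mul ?unitmx_mul ?Rm_unit ?uH // invRm mulmxA //.
have eYY : Y *m invmx P *m Y = Q.
  rewrite ePi /Y eQ !mulmxA -(mulmxA _ (Rm x) (Ri x)) Rm_Ri mulmx1.
  rewrite -(mulmxA _ (Ri x) (Rm x)) Ri_Rm mulmx1.
  rewrite -!mulmxA; congr (_ *m _); rewrite !mulmxA; congr (_ *m _).
  rewrite eM eHi em !udiag_mul //; congr udiag; apply/rowP=> k; rewrite !mxE.
  rewrite mulrAC -expr2 sqrtCK.
  have -> : 1 - h ord0 k ^+ 2 = (1 - h ord0 k) * (1 + h ord0 k) by ring.
  by rewrite mulfK.
have eZZ : Z *m Z = Pm12 *m Q *m Pm12.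
  rewrite /Z -eYY !mulmxA -(mulmxA _ Pm12 Pm12).
  have -> : Pm12 *m Pm12 = invmx P by rewrite /Pm12 -invmx_mul // e12.
  by rewrite ?mulmxA.
rewrite /gm -/P12 -/Pm12 (sqrtm_eq pZ eZZ) /Z !mulmxA mulmxV // mul1mx.
by rewrite -mulmxA mulVmx // mulmx1.
Qed.

End X.

Lemma cvg_Rm : mcvg0 Rm (Rm 0).
Proof.
have -> : Rm = fun x => adj U0 *m diag_mx (\row_k sqrtC (v ord0 k + x)) *m U0.
  by apply: functional_extensionality => x; rewrite /Rm -lock.
apply: mcvg0_mul; last exact: mcvg0_const.
apply: mcvg0_mul; first exact: mcvg0_const.
apply: mcvg0_diag => k; rewrite mxE addr0.
apply: (cvg0_ext (f := fun x => sqrtC (v ord0 k + x))); first by move=> x _; rewrite mxE.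
exact: cvg0_sqrt.
Qed.

Lemma cvg_Ri : mcvg0 Ri (Ri 0).
Proof.
have -> : Ri = fun x => adj U0 *m diag_mx (\row_k (sqrtC (v ord0 k + x))^-1) *m U0.
  by apply: functional_extensionality => x; rewrite /Ri -lock.
apply: mcvg0_mul; last exact: mcvg0_const.
apply: mcvg0_mul; first exact: mcvg0_const.
apply: mcvg0_diag => k; rewrite mxE addr0.
apply: (cvg0_ext (f := fun x => (sqrtC (v ord0 k + x))^-1)); first by move=> x _; rewrite mxE.
exact: cvg0_isqrt.
Qed.

Lemma main_lim : mcvg0 (fun x => Rm x *m sqrtm (1%:M + T x *m T x) *m Rm x)
  (Rm 0 *m sqrtm (1%:M + T 0 *m T 0) *m Rm 0).
Proof.
have cT : mcvg0 T (T 0).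
  apply: mcvg0_mul; last exact: cvg_Ri.
  apply: mcvg0_mul; [exact: cvg_Ri | exact: mcvg0_const].
apply: mcvg0_mul; last exact: cvg_Rm.
apply: mcvg0_mul; first exact: cvg_Rm.
apply: mcvg0_sqrtm.
- by move=> x x0; apply: A_psd; apply: ltW.
- exact: A_psd.
- by apply: mcvg0_add; [exact: mcvg0_const | exact: mcvg0_mul].
Qed.

Lemma main_gen : forall e, 0 < e -> exists d, 0 < d /\ forall x, 0 < x -> x < d ->
  forall i j, `|gm (J + x%:M) (J^T + x%:M) i j -
     (sqrtm V *m sqrtm (1%:M + (invmx (sqrtm V) *m S *m invmx (sqrtm V)) *m
        (invmx (sqrtm V) *m S *m invmx (sqrtm V))) *m sqrtm V) i j| < e.
Proof.
have eV0 : sqrtm V = Rm 0.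
  by apply: sqrtm_eq; [exact: Rm_psd | rewrite Rm_sq // raddf0 addr0].
have eVi : invmx (sqrtm V) = Ri 0 by rewrite eV0 invRm.
rewrite eVi eV0.
have h := mcvg0_ext (G := fun x => gm (J + x%:M) (J^T + x%:M))
  (fun x xp => esym (gm_eq (ltW xp) xp)) main_lim.
exact: mcvg0_unif h.
Qed.

End Main.

Lemma main_gen2 n (J : 'M[C]_n) : psd J ->
  (adj (map_mx (fun z => 'Re z) J) = map_mx (fun z => 'Re z) J /\
   forall x : 'cV[C]_n, x != 0 -> 0 < (adj x *m map_mx (fun z => 'Re z) J *m x) ord0 ord0) ->
  forall e, 0 < e -> exists d, 0 < d /\ forall x, 0 < x -> x < d ->
  forall i j, `|gm (J + x%:M) (J^T + x%:M) i j -
     (sqrtm (map_mx (fun z => 'Re z) J) *m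
      sqrtm (1%:M + (invmx (sqrtm (map_mx (fun z => 'Re z) J)) *m map_mx (fun z => 'Im z) J *m invmx (sqrtm (map_mx (fun z => 'Re z) J))) *m
        (invmx (sqrtm (map_mx (fun z => 'Re z) J)) *m map_mx (fun z => 'Im z) J *m invmx (sqrtm (map_mx (fun z => 'Re z) J)))) *m
      sqrtm (map_mx (fun z => 'Re z) J)) i j| < e.
Proof.
move=> pJ [hV qV].
have [U0 [v [uU0 eV _]]] := spectral_herm hV.
have vpos : forall k, 0 < v ord0 k.
  move=> k; rewrite -(quad_delta uU0 v k) -eV; apply: qV; exact: adjrow_neq0.
exact: (main_gen pJ uU0 eV vpos).
Qed.

End Gen.


Theorem lemma12 (R : realType) (n : nat) (J : 'M[R[i]]_n) :
  psdmx J -> pdmx (Remx J) ->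
  let V := Remx J in
  let S := Immx J in
  let V12 := sqrtmx V in
  let Vm12 := invmx V12 in
  is_gmean J J^T
    (V12 *m sqrtmx (1%:M + (Vm12 *m S *m Vm12) *m (Vm12 *m S *m Vm12)) *m V12).
Proof.
move=> pJ pdV V S V12 Vm12 e e0.
have e0' : 0 < (e%:C)%C by rewrite ltcR.
have [d [d0 hd]] := @main_gen2 R[i] n J pJ pdV _ e0'.
have rd : d \is Num.real by apply: gtr0_real.
exists (complex.Re d); split.
  by rewrite -ltcR RRe_real.
move=> eps eps0 epsd i j.
apply: (hd (eps%:C)%C).
- by rewrite ltcR.
- by rewrite -(RRe_real rd) ltcR.
Qed.
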